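(* Fix an integer $p \ge 2$ and positive reals $U_1,\dots,U_p > 0$, and a density $Q = 1/m$ with $m$ a positive integer, $1 \le m \le p-1$. Consider spinless fermion occupation configurations $(n_i)_{i\in\mathbb{Z}}$, $n_i\in\{0,1\}$, on the infinite one-dimensional lattice that are periodic with some period $L$ (i.e. $n_{i+L}=n_i$) and have $N = QL$ occupied sites per period. The energy density of such a configuration is $$\varepsilon = \frac{1}{L}\sum_{i=1}^{L}\sum_{k=1}^{p} U_k\, n_i\, n_{i+k}.$$ A ground state is a periodic configuration of density $Q$ whose energy density is minimal among all periodic configurations of density $Q$ (of any period). Then in any ground state, the number of empty sites between any two consecutive occupied sites (the ''space'' between them) is at most $p$.
   Context: This is the atomic limit ($t=0$) of the generalised $t$-$V$ model with Hamiltonian $H=\sum_i\sum_{m=1}^p U_m n_i n_{i+m}$, with repulsive interactions of maximal range $p$ (no convexity assumption on the $U_m$), at a critical (commensurate) density $Q=1/m$. A periodic system of $L$ sites is regarded as an infinite system with a unit cell of $L$ sites, and energies are compared via energy per site. *)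

(* Defs.v *)
From mathcomp Require Import all_boot all_order all_algebra.
Set Implicit Arguments. Unset Strict Implicit. Unset Printing Implicit Defensive.
Import Order.TTheory GRing.Theory Num.Theory.
Local Open Scope ring_scope.

Definition config := int -> bool.

Definition periodic (n : config) (L : nat) : Prop :=
  (0 < L)%N /\ forall i : int, n (i + L%:Z) = n i.

Definition occupied_per_period (n : config) (L : nat) : nat :=
  (\sum_(1 <= i < L.+1) (n i%:Z : nat))%N.

(* Density Q = 1/m : N = Q L, i.e. N * m = L. *)
Definition has_density_inv (n : config) (L m : nat) : Prop :=
  (occupied_per_period n L * m)%N = L.

Definition energy_density (R : realFieldType) (p : nat) (U : nat -> R)
    (n : config) (L : nat) : R :=
  (\sum_(1 <= i < L.+1) \sum_(1 <= k < p.+1)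
      U k * (n i%:Z)%:R * (n (i%:Z + k%:Z))%:R) / L%:R.

Definition ground_state (R : realFieldType) (p : nat) (U : nat -> R) (m : nat)
    (n : config) (L : nat) : Prop :=
  [/\ periodic n L, has_density_inv n L m &
      forall (n' : config) (L' : nat), periodic n' L' -> has_density_inv n' L' m ->
        energy_density p U n L <= energy_density p U n' L'].

(* Main.v *)
Require Import Defs.
From mathcomp Require Import all_boot all_order all_algebra.
From mathcomp Require Import zify ring lra.
From Stdlib Require Import Classical.
Set Implicit Arguments. Unset Strict Implicit. Unset Printing Implicit Defensive.
Import Order.TTheory GRing.Theory Num.Theory.
Local Open Scope ring_scope.

Definition wsum (R : realFieldType) (f : int -> R) (a : int) (P : nat) : R :=
  \sum_(0 <= t < P) f (a + t%:Z).

Lemma wsum_split (R : realFieldType) (f : int -> R) a P1 P2 :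
  wsum f a (P1 + P2) = wsum f a P1 + wsum f (a + P1%:Z) P2.
Proof.
rewrite /wsum (big_cat_nat _ (n := P1)) ?leq_addr //=; congr (_ + _).
rewrite -{1}[P1]add0n big_addn addKn; apply: eq_bigr => t _.
by rewrite PoszD addrA [a + t%:Z + _]addrAC.
Qed.

Lemma wsum_shift1 (R : realFieldType) (f : int -> R) (P : nat) a :
  (forall x, f (x + P%:Z) = f x) -> wsum f (a + 1) P = wsum f a P.
Proof.
move=> hf; case: P hf => [|P] hf; first by rewrite /wsum !big_geq.
rewrite /wsum big_nat_recr //= big_nat_recl //=.
rewrite addr0 addrC; congr (_ + _).
  by rewrite -addrA -PoszD add1n hf.
by apply: eq_bigr => t _; rewrite -addrA -PoszD add1n.
Qed.

Lemma wsum_shift (R : realFieldType) (f : int -> R) (P : nat) a b :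
  (forall x, f (x + P%:Z) = f x) -> wsum f a P = wsum f b P.
Proof.
move=> hf.
have H : forall a (d : nat), wsum f (a + d%:Z) P = wsum f a P.
  move=> a0; elim=> [|d IH]; first by rewrite addr0.
  by rewrite -addn1 PoszD addrA wsum_shift1.
case: (lerP a b) => hab.
  have -> : b = a + (`|b - a|%N)%:Z by lia.
  by rewrite H.
have -> : a = b + (`|a - b|%N)%:Z by lia.
by rewrite H.
Qed.

Lemma wsum_mul (R : realFieldType) (f : int -> R) (L1 : nat) a (m : nat) :
  (forall x, f (x + L1%:Z) = f x) -> wsum f a (m * L1) = m%:R * wsum f a L1.
Proof.
move=> hf; elim: m a => [|m IH] a; first by rewrite mul0n mul0r /wsum big_geq.
rewrite mulSn wsum_split IH (wsum_shift (a + L1%:Z) a hf).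
by rewrite -addn1 natrD mulrDl mul1r addrC.
Qed.

Lemma wsumD (R : realFieldType) (f g : int -> R) a P :
  wsum (fun x => f x + g x) a P = wsum f a P + wsum g a P.
Proof. by rewrite /wsum big_split. Qed.

Lemma wsumB (R : realFieldType) (f g : int -> R) a P :
  wsum (fun x => f x - g x) a P = wsum f a P - wsum g a P.
Proof. by rewrite /wsum sumrB. Qed.

Lemma wsum_ext (R : realFieldType) (f g : int -> R) a P :
  (forall t, (t < P)%N -> f (a + t%:Z) = g (a + t%:Z)) -> wsum f a P = wsum g a P.
Proof. by move=> h; apply: eq_big_nat => t /andP[_ ht]; apply: h. Qed.

Lemma wsum_ge0 (R : realFieldType) (f : int -> R) a P :
  (forall x, 0 <= f x) -> 0 <= wsum f a P.
Proof. by move=> h; apply: sumr_ge0 => t _. Qed.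

Lemma wsum_first (R : realFieldType) (f : int -> R) a P :
  (forall x, 0 <= f x) -> (0 < P)%N -> f a <= wsum f a P.
Proof.
move=> h; case: P => // P _; rewrite /wsum big_nat_recl // addr0 lerDl.
by apply: sumr_ge0.
Qed.

Lemma wsum_exch (R : realFieldType) (F : int -> nat -> R) a P (lo q : nat) :
  wsum (fun x => \sum_(lo <= k < q) F x k) a P = \sum_(lo <= k < q) wsum (F^~ k) a P.
Proof. by rewrite /wsum exchange_big. Qed.

Definition ec (R : realFieldType) (p : nat) (U : nat -> R) (c : config) (x : int) : R :=
  \sum_(1 <= k < p.+1) U k * (c x)%:R * (c (x + k%:Z))%:R.

Definition cnt (R : realFieldType) (c : config) (x : int) : R := (c x)%:R.

Definition ind (R : realFieldType) (P : nat) (x0 x : int) : R :=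
  ((((x - x0) %% P%:Z)%Z == 0) : nat)%:R.

Lemma energy_wsum (R : realFieldType) p (U : nat -> R) c L :
  energy_density p U c L = wsum (ec p U c) 1 L / L%:R.
Proof.
rewrite /energy_density /wsum; congr (_ / _).
rewrite -{1}[1%N]add0n big_addn subn1 /=; apply: eq_bigr => t _.
by rewrite addn1 /ec -[t.+1]add1n PoszD.
Qed.

Lemma occ_wsum (R : realFieldType) c L :
  (occupied_per_period c L)%:R = wsum (@cnt R c) 1 L.
Proof.
rewrite /occupied_per_period natr_sum /wsum.
rewrite -{1}[1%N]add0n big_addn subn1 /=; apply: eq_bigr => t _.
by rewrite addn1 /cnt -[t.+1]add1n PoszD.
Qed.

Lemma per_mul (c : config) (L1 : nat) :
  (forall x, c (x + L1%:Z) = c x) -> forall (q : nat) x, c (x + (q * L1)%N%:Z) = c x.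
Proof.
move=> h; elim=> [|q IH] x; first by rewrite mul0n addr0.
by rewrite mulSn PoszD addrA IH h.
Qed.

Lemma ec_per (R : realFieldType) p (U : nat -> R) (c : config) (L1 : nat) :
  (forall x, c (x + L1%:Z) = c x) -> forall x, ec p U c (x + L1%:Z) = ec p U c x.
Proof.
move=> h x; rewrite /ec; apply: eq_bigr => k _.
by rewrite h addrAC h.
Qed.

Lemma ec_ge0 (R : realFieldType) p (U : nat -> R) c x :
  (forall k : nat, (1 <= k <= p)%N -> 0 < U k) -> 0 <= ec p U c x.
Proof.
move=> hU; rewrite /ec big_nat_cond; apply: sumr_ge0 => k /andP[/andP[h1 h2] _].
by rewrite !mulr_ge0 // ltW // hU // h1 -ltnS.
Qed.

Lemma wsum_ind (R : realFieldType) (g : int -> R) x0 (P : nat) : (0 < P)%N ->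
  wsum (fun x => g x * ind R P x0 x) x0 P = g x0.
Proof.
case: P => // P _; rewrite /wsum big_nat_recl // big_nat_cond big1 ?addr0.
  by rewrite /ind subrr mod0z eqxx mulr1.
move=> t /andP[/andP[_ ht] _]; rewrite /ind addrAC subrr add0r modz_small; last first.
  by apply/andP; split => //; lia.
by rewrite mulr0.
Qed.

Lemma cnt_le1 (c : config) (p : nat) (x : int) :
  (forall y (k : nat), (1 <= k <= p)%N -> ~~ (c y && c (y + k%:Z))) ->
  forall q, (q <= p.+1)%N -> (\sum_(0 <= k < q) ((c (x + k%:Z)%R) : nat) <= 1)%N.
Proof.
move=> h; elim=> [|q IH] hq; first by rewrite big_geq.
rewrite big_nat_recr //=; case hc: (c (x + q%:Z)); last by rewrite addn0 IH // ltnW.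
rewrite big1_seq //= => k; rewrite mem_index_iota => /andP[_ hk].
apply/eqP; rewrite eqb0; apply/negP => hck.
have := h (x + k%:Z) (q - k)%N; rewrite hck /=.
have -> : x + k%:Z + (q - k)%N%:Z = x + q%:Z by rewrite -addrA -PoszD subnKC // ltnW.
rewrite hc /= => H; have : false by apply: H; lia.
by [].
Qed.

Lemma ec_term (R : realFieldType) p (U : nat -> R) (c : config) y (k : nat) :
  (forall k : nat, (1 <= k <= p)%N -> 0 < U k) ->
  (1 <= k <= p)%N -> c y -> c (y + k%:Z) -> 0 < ec p U c y.
Proof.
move=> hU /andP[hk1 hk2] hy hyk; rewrite /ec (big_cat_nat _ (n := k)) //=; last by lia.
rewrite big_nat_recl //= hy hyk /= mulr1 mulr1.
have h1 : 0 <= \sum_(1 <= i < k) U i * (c y)%:R * (c (y + i%:Z))%:R.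
  rewrite big_nat_cond; apply: sumr_ge0 => i /andP[/andP[i1 i2] _].
  by rewrite !mulr_ge0 // ltW // hU //; lia.
have h2 : 0 <= \sum_(k <= i < p) U i.+1 * (c y)%:R * (c (y + i.+1%:Z))%:R.
  rewrite big_nat_cond; apply: sumr_ge0 => i /andP[/andP[i1 i2] _].
  by rewrite !mulr_ge0 // ltW // hU //; lia.
have h3 := hU k (introT andP (conj hk1 hk2)).
rewrite hy in h1 h2; lra.
Qed.

Lemma E_pos (R : realFieldType) p (U : nat -> R) (c : config) (L1 N : nat) :
  (forall k : nat, (1 <= k <= p)%N -> 0 < U k) ->
  (0 < L1)%N ->
  (forall x, c (x + L1%:Z) = c x) ->
  wsum (@cnt R c) 0 L1 = N%:R -> (L1 < p.+1 * N)%N -> 0 < wsum (ec p U c) 0 L1.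
Proof.
move=> hU hL1 hc hN hlt.
case: (classic (exists y (k : nat), (1 <= k <= p)%N /\ c y /\ c (y + k%:Z))).
  move=> [y [k [hk [hy hyk]]]].
  rewrite (wsum_shift 0 y (ec_per p U hc)).
  apply: (lt_le_trans _ (wsum_first y (fun x => ec_ge0 c x hU) hL1)).
  exact: ec_term hU hk hy hyk.
move=> hno.
have hno' : forall y (k : nat), (1 <= k <= p)%N -> ~~ (c y && c (y + k%:Z)).
  move=> y k hk; apply/negP => /andP[h1 h2]; apply: hno; by exists y, k.
have hW : forall x, \sum_(0 <= k < p.+1) @cnt R c (x + k%:Z) <= 1.
  move=> x; rewrite /cnt -natr_sum lern1; exact: cnt_le1 hno' _ (leqnn _).
have hS : wsum (fun x => \sum_(0 <= k < p.+1) @cnt R c (x + k%:Z)) 0 L1 <= L1%:R.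
  apply: (le_trans (y := \sum_(0 <= t < L1) (1:R))); first by apply: ler_sum => t _; exact: hW.
  by rewrite sumr_const_nat subn0.
rewrite wsum_exch in hS.
have hk : forall k : nat, wsum (fun x => @cnt R c (x + k%:Z)) 0 L1 = N%:R.
  move=> k; rewrite -hN -(wsum_shift k%:Z 0 (f := @cnt R c)); last by move=> x; rewrite /cnt hc.
  by rewrite /wsum; apply: eq_bigr => t _; rewrite add0r addrC.
rewrite (eq_bigr (fun _ => N%:R)) in hS; last by move=> k0 _; exact: hk.
rewrite sumr_const_nat subn0 -[N%:R *+ _]mulr_natr -natrM ler_nat in hS.
by move: hS hlt; rewrite mulnC; lia.
Qed.

Lemma ind_mul0 (R : realFieldType) (P : nat) x0 x (k : nat) :
  (0 < k < P)%N -> ind R P x0 x * ind R P x0 (x + k%:Z) = 0.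
Proof.
move=> hk; rewrite /ind; case: eqP => h1; case: eqP => h2 //=; rewrite ?mul0r ?mulr0 //.
exfalso; move: h2; rewrite addrAC -modzDml h1 add0r modz_small; first by lia.
by apply/andP; split; lia.
Qed.

Lemma ind_per (R : realFieldType) (P : nat) x0 x :
  ind R P x0 (x + P%:Z) = ind R P x0 x.
Proof. by rewrite /ind addrAC modzDr. Qed.

Lemma core (R : realFieldType) p (U : nat -> R) (m : nat) (c : config) (L1 N : nat) :
  (2 <= p)%N -> (forall k : nat, (1 <= k <= p)%N -> 0 < U k) ->
  (1 <= m <= p.-1)%N -> (p < L1)%N ->
  (forall x, c (x + L1%:Z) = c x) ->
  wsum (@cnt R c) 0 L1 = N%:R -> (N * m = L1.+1)%N ->
  exists (c2 : config) (P : nat), [/\ periodic c2 P, has_density_inv c2 P m &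
     energy_density p U c2 P * (L1.+1)%:R < wsum (ec p U c) 0 L1].
Proof.
move=> hp hU hm hpL hc hN hNm.
set E := wsum (ec p U c) 0 L1.
have hL1 : (0 < L1)%N by lia.
have hN0 : (0 < N)%N by move: hNm; case: (N) => //=.
have hEpos : 0 < E.
  apply: (E_pos hU hL1 hc hN); nia.
pose D x := \sum_(1 <= k < p.+1)
   U k * ((c x)%:R * (c (x + k%:Z))%:R + (c (x - k%:Z))%:R * (c x)%:R).
have hDsplit : forall x, D x = ec p U c x +
    \sum_(1 <= k < p.+1) U k * (c (x - k%:Z))%:R * (c x)%:R.
  move=> x; rewrite /D /ec -big_split /=; apply: eq_bigr => k _; ring.
have hsec : wsum (fun x => \sum_(1 <= k < p.+1) U k * (c (x - k%:Z))%:R * (c x)%:R) 0 L1 = E.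
  rewrite /E /ec !wsum_exch; apply: eq_bigr => k _.
  rewrite (wsum_shift 0 (- k%:Z) (f := fun y => U k * (c y)%:R * (c (y + k%:Z))%:R)); last first.
    by move=> x; rewrite hc addrAC hc.
  rewrite /wsum; apply: eq_bigr => t _.
  by rewrite add0r [- _ + _]addrC subrK.
have hD2 : wsum D 0 L1 = E + E.
  rewrite (@wsum_ext _ D (fun x => ec p U c x +
    \sum_(1 <= k < p.+1) U k * (c (x - k%:Z))%:R * (c x)%:R)); last by move=> t _; exact: hDsplit.
  by rewrite wsumD hsec.
have hx0 : exists x0, c x0 /\ E < N%:R * D x0.
  apply: NNPP => hno.
  have hle : forall x, N%:R * D x <= (c x)%:R * E.
    move=> x; case hcx: (c x).
      rewrite mul1r leNgt; apply/negP => hlt; apply: hno; by exists x.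
    rewrite mul0r /D big1 ?mulr0 // => k _; rewrite hcx mul0r mulr0 addr0 mulr0 //.
  have : wsum (fun x => N%:R * D x) 0 L1 <= wsum (fun x => (c x)%:R * E) 0 L1.
    by apply: ler_sum => t _; exact: hle.
  rewrite /wsum -mulr_sumr -mulr_suml.
  rewrite -/(wsum D 0 L1) -/(wsum (@cnt R c) 0 L1) hD2 hN => hcon.
  have hN0r : (0 : R) < N%:R by rewrite ltr0n.
  have := mulr_gt0 hN0r hEpos; nra.
case: hx0 => x0 [hcx0 hE].
set P := (m * L1)%N.
have hP : (p < P)%N by rewrite /P; nia.
pose c2 : config := fun x => c x && (((x - x0) %% P%:Z)%Z != 0).
have hcP : forall x, c (x + P%:Z) = c x := per_mul hc m.
have hc2 : forall x, ((c2 x)%:R : R) = @cnt R c x - @cnt R c x * ind R P x0 x.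
  move=> x; rewrite /c2 /cnt /ind; case: (c x); case: eqP => _ /=; ring.
have hc2P : forall x, c2 (x + P%:Z) = c2 x.
  by move=> x; rewrite /c2 hcP addrAC modzDr.
exists c2, P; split.
- by split => //; lia.
- apply/eqP; rewrite -(eqr_nat R) natrM occ_wsum; apply/eqP.
  rewrite (wsum_shift 1 0 (f := @cnt R c2)); last by move=> x; rewrite /cnt hc2P.
  rewrite (@wsum_ext _ (@cnt R c2) (fun x => @cnt R c x - @cnt R c x * ind R P x0 x)); last first.
    by move=> t _; exact: hc2.
  rewrite wsumB.
  have h1 : wsum (@cnt R c) 0 P = m%:R * N%:R.
    by rewrite wsum_mul ?hN // => x; rewrite /cnt hc.
  have h2 : wsum (fun x => @cnt R c x * ind R P x0 x) 0 P = 1.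
    rewrite (wsum_shift 0 x0); last by move=> x; rewrite /cnt hcP ind_per.
    by rewrite wsum_ind /cnt ?hcx0 //; lia.
  have hL : (L1%:R : R) = N%:R * m%:R - 1.
    have := congr1 (fun n => n%:R : R) hNm; rewrite /= natrM -addn1 natrD => ->; ring.
  rewrite h1 h2 /P natrM hL; ring.
- rewrite energy_wsum (wsum_shift 1 0 (ec_per p U hc2P)).
  have hec2 : forall x, ec p U c2 x = ec p U c x - ec p U c x * ind R P x0 x -
      \sum_(1 <= k < p.+1) U k * (c x)%:R * (c (x + k%:Z))%:R * ind R P x0 (x + k%:Z).
    move=> x; rewrite /ec mulr_suml -!sumrB big_nat_cond [RHS]big_nat_cond.
    apply: eq_bigr => k /andP[/andP[k1 k2] _].
    have hk : (0 < k < P)%N by apply/andP; split; lia.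
    have h0 := ind_mul0 R x0 x hk.
    rewrite (hc2 x) (hc2 (x + k%:Z)) /cnt.
    move: h0; set ix := ind R P x0 x; set iy := ind R P x0 (x + k%:Z).
    set cx := ((c x)%:R : R); set cy := ((c (x + k%:Z))%:R : R) => h0.
    transitivity (U k * cx * cy * (1 - ix - iy + ix * iy)); first ring.
    by rewrite h0; ring.
  rewrite (@wsum_ext _ (ec p U c2) (fun x => ec p U c x - ec p U c x * ind R P x0 x -
      \sum_(1 <= k < p.+1) U k * (c x)%:R * (c (x + k%:Z))%:R * ind R P x0 (x + k%:Z)));
    last by move=> t _; exact: hec2.
  rewrite !wsumB.
  have hA : wsum (ec p U c) 0 P = m%:R * E by rewrite wsum_mul //; exact: ec_per.
  have hB : wsum (fun x => ec p U c x * ind R P x0 x) 0 P = ec p U c x0.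
    rewrite (wsum_shift 0 x0); last by move=> x; rewrite (ec_per p U hcP) ind_per.
    by rewrite wsum_ind //; lia.
  have hC : wsum (fun x => \sum_(1 <= k < p.+1) U k * (c x)%:R * (c (x + k%:Z))%:R *
       ind R P x0 (x + k%:Z)) 0 P = \sum_(1 <= k < p.+1) U k * (c (x0 - k%:Z))%:R * (c x0)%:R.
    rewrite wsum_exch; apply: eq_bigr => k _.
    rewrite (wsum_shift 0 (x0 - k%:Z) (f := fun x => U k * (c x)%:R * (c (x + k%:Z))%:R *
       ind R P x0 (x + k%:Z))); last by move=> x; rewrite hcP addrAC hcP ind_per.
    transitivity (wsum (fun y => U k * (c (y - k%:Z))%:R * (c y)%:R * ind R P x0 y) x0 P);
      last by rewrite wsum_ind //; lia.
    rewrite /wsum; apply: eq_bigr => t _.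
    by rewrite (addrAC x0) subrK.
  rewrite hA hB hC.
  have hX : m%:R * E - ec p U c x0 -
      \sum_(1 <= k < p.+1) U k * (c (x0 - k%:Z))%:R * (c x0)%:R = m%:R * E - D x0.
    by rewrite hDsplit; ring.
  rewrite hX.
  have hPpos : (0 : R) < P%:R by rewrite ltr0n; lia.
  rewrite mulrAC ltr_pdivrMr //.
  have hL : (L1.+1%:R : R) = N%:R * m%:R by rewrite -natrM hNm.
  have hL' : (L1%:R : R) = N%:R * m%:R - 1.
    by rewrite -hL -addn1 natrD; ring.
  rewrite /P natrM hL hL'.
  have hm0 : (0 : R) < m%:R by rewrite ltr0n; lia.
  have := mulr_gt0 hm0 hm0; nra.
Qed.
Theorem theorem2 (R : realFieldType) (p : nat) (U : nat -> R) (m : nat)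
    (hp : (2 <= p)%N)
    (hU : forall k : nat, (1 <= k <= p)%N -> 0 < U k)
    (hm : (1 <= m <= p.-1)%N)
    (n : config) (L : nat)
    (hgs : ground_state p U m n L) :
  forall i j : int, i < j -> n i -> n j ->
    (forall k : int, i < k < j -> ~~ n k) ->
    j - i - 1 <= p%:Z.
Proof.
move=> i j hij ni nj hgap; rewrite leNgt; apply/negP => hG.
case: hgs => [[hL0 hper] hden hmin].
have hper' : forall y, n y = n (y - L%:Z) by move=> y; rewrite -{1}(subrK L%:Z y) hper.
have F1 : forall y, i + L%:Z < y < j + L%:Z -> ~~ n y.
  move=> y /andP[h1 h2]; rewrite hper'; apply: hgap; apply/andP; split; lia.
have F2 : j <= i + L%:Z.
  rewrite leNgt; apply/negP => h; have := hgap (i + L%:Z); rewrite hper ni => H.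
  have : ~~ true by apply: H; apply/andP; split; lia.
  by [].
set L1 := L.-1.
have hLL : L = L1.+1 by rewrite /L1 prednK.
pose c : config := fun x => n (j + ((x - j) %% L1%:Z)%Z).
have hc : forall x, c (x + L1%:Z) = c x by move=> x; rewrite /c addrAC modzDr.
have hpL : (p < L1)%N by lia.
have hwin : forall t : nat, (t < L1)%N -> c (j + t%:Z) = n (j + t%:Z).
  move=> t ht; rewrite /c addrAC subrr add0r modz_small //; apply/andP; split; lia.
have hec : forall t : nat, (t < L1)%N -> ec p U c (j + t%:Z) = ec p U n (j + t%:Z).
  move=> t ht; rewrite /ec (hwin t ht).
  case hn: (n (j + t%:Z)); last by apply: eq_bigr => k _; rewrite /= !(mulr0n, mulr0, mul0r).
  have hx : j + t%:Z <= i + L%:Z.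
    rewrite leNgt; apply/negP => h; have := F1 (j + t%:Z); rewrite hn => H.
    have : ~~ true by apply: H; apply/andP; split; lia.
    by [].
  rewrite big_nat_cond [RHS]big_nat_cond; apply: eq_bigr => k /andP[/andP[k1 k2] _].
  by rewrite -addrA -PoszD hwin //; lia.
have hlast : n (j + L1%:Z) = false.
  by apply/negbTE; apply: F1; apply/andP; split; lia.
have hnper : forall x, ec p U n (x + L%:Z) = ec p U n x by exact: ec_per.
set E := wsum (ec p U c) 0 L1.
have hE : wsum (ec p U n) 1 L = E.
  rewrite (wsum_shift 1 j hnper) hLL -addn1 wsum_split.
  have -> : wsum (ec p U n) (j + L1%:Z) 1 = 0.
    rewrite /wsum big_nat1 addr0 /ec big1 // => k _; rewrite hlast mulr0 mul0r //.
  rewrite addr0 /E (wsum_shift 0 j (ec_per p U hc)).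
  by symmetry; apply: wsum_ext => t ht; exact: hec.
set N := occupied_per_period n L.
have hN : wsum (@cnt R c) 0 L1 = N%:R.
  rewrite occ_wsum (wsum_shift 1 j (f := @cnt R n)); last by move=> x; rewrite /cnt hper.
  rewrite hLL -addn1 wsum_split.
  have -> : wsum (@cnt R n) (j + L1%:Z) 1 = 0 by rewrite /wsum big_nat1 addr0 /cnt hlast.
  rewrite addr0 (wsum_shift 0 j (f := @cnt R c)); last by move=> x; rewrite /cnt hc.
  by apply: wsum_ext => t ht; rewrite /cnt hwin.
have hNm : (N * m = L1.+1)%N by move: hden; rewrite /has_density_inv -/N; lia.
have [c2 [P [hper2 hden2 hlt]]] := core hp hU hm hpL hc hN hNm.
have := hmin c2 P hper2 hden2.
rewrite energy_wsum hE; rewrite -hLL -/E in hlt.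
have hLpos : (0 : R) < L%:R by rewrite ltr0n.
rewrite ler_pdivrMr // => hle.
by have := lt_le_trans hlt hle; rewrite ltxx.
Qed.
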